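(* There exists an NWBTS$(8;b)$ for every $b\ge0$ with $b\equiv 9,10,18,19,27,28,29,37,38,46,47\pmod{56}$.
   Context: A triple system TS$(v;b)$ is a pair $(V,\mathcal F)$, $V$ a set of $v\ge3$ points, $\mathcal F$ a multiset of $b$ 3-subsets (blocks). $\lambda_{x_1,\dots,x_j}$ is the number of blocks containing $\{x_1,\dots,x_j\}$; $j$-balanced means $|\lambda_{x_1,\dots,x_j}-\lambda_{y_1,\dots,y_j}|\le1$ for all $j$-subsets. Associated pair $(\lambda,\varepsilon)$ of $(v,b)$: integers with $3b=\lambda\binom v2+\varepsilon$, $-v/2<\varepsilon<v/2$. (C1): $v\equiv 2\pmod 3$ and $b\in\{\lfloor \lambda v(v-1)/6\rfloor,\lceil \lambda v(v-1)/6\rceil\}$ for an integer $\lambda$ with $\lambda\equiv1,2\pmod 3$ if $v\equiv5\pmod6$ and $\lambda\equiv 2,4\pmod 6$ if $v\equiv2\pmod 6$. (C2): $v$ even and $\lambda v(v-1)/6-v/6<b<\lambda v(v-1)/6+v/6$ for an odd integer $\lambda$. In both, $\lambda$ is that of the associated pair. Defect graph (when all $\lambda_{x,y}\in\{\lambda-1,\lambda,\lambda+1\}$): graph on $V$ with edges the pairs with $\lambda_{x,y}=\lambda+1$ (label $+1$) or $\lambda-1$ (label $-1$); isomorphisms preserve labels. $G_{\pm1}$: triangle with two $\pm1$ edges and one $\mp1$ edge; $G_{\pm2}$: 4-cycle with three $\pm1$ edges and one $\mp1$ edge. For even $v$: $H^0_{v,\varepsilon}$: perfect matching with $(v+2\varepsilon)/4$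 edges $+1$, $(v-2\varepsilon)/4$ edges $-1$; $H^1_{v,\varepsilon}$: disjoint union of a $K_{1,3}$ with two $+1$ and one $-1$ edge and a matching of the other $v-4$ vertices with $(v-6+2\varepsilon)/4$ edges $+1$, $(v-2-2\varepsilon)/4$ edges $-1$; $H^2_{v,\varepsilon}$: disjoint union of a $K_{1,3}$ with one $+1$ and two $-1$ edges and a matching of the other $v-4$ vertices with $(v-2+2\varepsilon)/4$ edges $+1$, $(v-6-2\varepsilon)/4$ edges $-1$. Nearly 2-balanced: all $\lambda_{x,y}\in\{\lambda-1,\lambda,\lambda+1\}$ and defect graph $\cong G_\varepsilon$ under (C1); under (C2) $\cong H^0_{v,\varepsilon}$ if $\varepsilon\equiv v/2\pmod 2$, else $\cong H^1_{v,\varepsilon}$ or $H^2_{v,\varepsilon}$. An NWBTS$(v;b)$ is a nearly 2-balanced, 3-balanced TS$(v;b)$ with $(v,b)$ in (C1) or (C2). (For $v=8$ the listed $b$ are exactly those for which $(8,b)$ satisfies (C1) or (C2).) *)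

(* Defs.v *)
From mathcomp Require Import all_boot all_order all_fingroup all_algebra.
Set Implicit Arguments. Unset Strict Implicit. Unset Printing Implicit Defensive.
Import Order.TTheory GRing.Theory Num.Theory.
Local Open Scope ring_scope.

(* A triple system TS(v;b): points 'I_v (v >= 3), a multiset (seq) of b
   blocks, each a 3-subset. *)
Definition is_TS (v b : nat) (F : seq {set 'I_v}) : Prop :=
  (3 <= v)%N /\ size F = b /\ all (fun B : {set 'I_v} => #|B| == 3%N) F.

Definition lam (v : nat) (F : seq {set 'I_v}) (S : {set 'I_v}) : nat :=
  count (fun B : {set 'I_v} => S \subset B) F.

Definition j_balanced (v : nat) (F : seq {set 'I_v}) (j : nat) : Prop :=
  forall S T : {set 'I_v}, #|S| = j -> #|T| = j ->
    (lam F S <= (lam F T).+1)%N.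

Definition assoc_pair (v b : nat) (l e : int) : Prop :=
  (3 * b%:Z = l * ('C(v, 2))%:Z + e) /\ (- v%:Z < 2 * e) /\ (2 * e < v%:Z).

Definition C1 (v b : nat) (l : int) : Prop :=
  (v %% 3 = 2)%N /\
  (b%:Z = ((l * (v * (v - 1))%:Z) %/ 6)%Z \/
   b%:Z = - (((- (l * (v * (v - 1))%:Z)) %/ 6)%Z)) /\
  (if (v %% 6 == 5)%N then (l %% 3)%Z \in [:: 1; 2]
   else (l %% 6)%Z \in [:: 2; 4]).

(* Condition (C2): v even, lambda odd,
   l v(v-1)/6 - v/6 < b < l v(v-1)/6 + v/6 (multiplied by 6) *)
Definition C2 (v b : nat) (l : int) : Prop :=
  ~~ odd v /\ (l %% 2)%Z = 1 /\
  l * (v * (v - 1))%:Z - v%:Z < 6 * b%:Z /\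
  6 * b%:Z < l * (v * (v - 1))%:Z + v%:Z.

(* Labelled graphs on 'I_v: functions giving the label (-1, 0 = no edge, +1)
   of each pair of distinct vertices. The defect graph: *)
Definition defect (v : nat) (F : seq {set 'I_v}) (l : int) (x y : 'I_v) : int :=
  (lam F [set x; y])%:Z - l.

Definition defect_iso (v : nat) (F : seq {set 'I_v}) (l : int)
  (g : nat -> nat -> int) : Prop :=
  exists s : {perm 'I_v}, forall x y : 'I_v, x != y ->
    defect F l (s x) (s y) = g (nat_of_ord x) (nat_of_ord y).

(* G_{s}: triangle 0-1-2, edges {0,1},{1,2} labelled s, {0,2} labelled -s *)
Definition Gtri (s : int) (x y : nat) : int :=
  let a := minn x y in let c := maxn x y in
  if ((a == 0) && (c == 1))%N || ((a == 1) && (c == 2))%N then s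
  else if ((a == 0) && (c == 2))%N then - s else 0.

(* G_{2s}: 4-cycle 0-1-2-3-0, {0,1},{1,2},{2,3} labelled s, {0,3} labelled -s *)
Definition Gcyc (s : int) (x y : nat) : int :=
  let a := minn x y in let c := maxn x y in
  if ((a == 0) && (c == 1))%N || ((a == 1) && (c == 2))%N
     || ((a == 2) && (c == 3))%N then s
  else if ((a == 0) && (c == 3))%N then - s else 0.

(* perfect matching on vertices o, o+1, ...: edges {o+2i, o+2i+1};
   the first p of them labelled +1, the others -1 *)
Definition matching (o p : nat) (x y : nat) : int :=
  let a := minn x y in let c := maxn x y in
  if [&& (o <= a)%N, c == a.+1 & ~~ odd (a - o)] then
    (if ((a - o)./2 < p)%N then 1 else -1)
  else 0.

Definition H0 (p : nat) := matching 0 p.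

(* K_{1,3} with centre 0, leaves 1,2,3: {0,1} +1, {0,2} t, {0,3} -1;
   plus matching on 4..v-1 with p edges labelled +1 *)
Definition Hstar (t : int) (p : nat) (x y : nat) : int :=
  let a := minn x y in let c := maxn x y in
  if ((a == 0) && (c == 1))%N then 1
  else if ((a == 0) && (c == 2))%N then t
  else if ((a == 0) && (c == 3))%N then -1
  else matching 4 p x y.

Definition H1 := Hstar 1.
Definition H2 := Hstar (-1).

Definition defect_C1 (v : nat) (F : seq {set 'I_v}) (l e : int) : Prop :=
  exists2 s : int, s \in [:: 1; -1] &
    ((e = s /\ defect_iso F l (Gtri s)) \/
     (e = 2 * s /\ defect_iso F l (Gcyc s))).

Definition defect_C2 (v : nat) (F : seq {set 'I_v}) (l e : int) : Prop :=
  if (2 %| (e - (v./2)%:Z))%Z then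
    exists p m : nat, 4 * p%:Z = v%:Z + 2 * e /\ 4 * m%:Z = v%:Z - 2 * e /\
      defect_iso F l (H0 p)
  else
    (exists p m : nat, 4 * p%:Z = v%:Z - 6 + 2 * e /\
       4 * m%:Z = v%:Z - 2 - 2 * e /\ defect_iso F l (H1 p)) \/
    (exists p m : nat, 4 * p%:Z = v%:Z - 2 + 2 * e /\
       4 * m%:Z = v%:Z - 6 - 2 * e /\ defect_iso F l (H2 p)).

Definition pair_range (v : nat) (F : seq {set 'I_v}) (l : int) : Prop :=
  forall x y : 'I_v, x != y -> defect F l x y \in [:: -1; 0; 1].

Definition NWBTS (v b : nat) (F : seq {set 'I_v}) : Prop :=
  is_TS b F /\ j_balanced F 3 /\
  exists l e : int, assoc_pair v b l e /\ pair_range F l /\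
    ((C1 v b l /\ defect_C1 F l e) \/ (C2 v b l /\ defect_C2 F l e)).
Arguments NWBTS : clear implicits.

(* Main.v *)
Require Import Defs.
From mathcomp Require Import all_boot all_order all_fingroup all_algebra.
From mathcomp Require Import zify ring lra.
Import Order.TTheory GRing.Theory Num.Theory.

Set Implicit Arguments. Unset Strict Implicit.
Section Helpers.
Local Open Scope ring_scope.

Definition trip := (nat * nat * nat)%type.
Definition memt (t : trip) (x : nat) : bool :=
  [|| x == t.1.1, x == t.1.2 | x == t.2]%N.
Definition okt (t : trip) : bool :=
  [&& (t.1.1 < 8)%N, (t.1.2 < 8)%N, (t.2 < 8)%N, t.1.1 != t.1.2,
      t.1.2 != t.2 & t.1.1 != t.2].
Definition Bset (t : trip) : {set 'I_8} :=
  [set inord t.1.1; inord t.1.2; inord t.2].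

Definition cnt2 (L : seq trip) (a b : nat) : nat :=
  count (fun t => memt t a && memt t b) L.
Definition cnt3 (L : seq trip) (a b c : nat) : nat :=
  count (fun t => [&& memt t a, memt t b & memt t c]) L.

Definition pairchk (L : seq trip) (g : nat -> nat -> int) (l : int) : bool :=
  all (fun a => all (fun b => (a != b) ==>
     (((cnt2 L a b)%:Z - l == g a b) && (g a b \in [:: -1; 0; 1])))
   (iota 0 8)) (iota 0 8).
Definition tripchk (L : seq trip) (P : nat -> bool) : bool :=
  all (fun a => all (fun b => all (fun c =>
     [&& a != b, b != c & c != a] ==> P (cnt3 L a b c))
   (iota 0 8)) (iota 0 8)) (iota 0 8).
Definition pairchk6 (L : seq trip) : bool :=
  all (fun a => all (fun b => (a != b) ==> (cnt2 L a b == 6)%N)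
   (iota 0 8)) (iota 0 8).
Definition L9 : seq trip := [:: (0,1,2); (0,1,4); (0,2,6); (0,5,7); (1,3,7); (1,5,6); (2,3,5); (2,4,7); (3,4,6)].
Definition L10 : seq trip := [:: (0,1,2); (2,3,4); (2,3,6); (2,5,7); (0,3,5); (1,3,7); (0,4,7); (0,1,6); (1,4,5); (4,5,6)].
Definition L18 : seq trip := [:: (0,1,3); (0,2,3); (0,2,4); (0,3,5); (0,4,6); (0,5,7); (0,6,7); (2,4,5); (1,2,6); (2,5,7); (2,6,7); (1,3,7); (1,4,5); (1,5,6); (1,4,7); (3,4,6); (3,4,7); (3,5,6)].
Definition L19 : seq trip := [:: (0,1,2); (0,1,3); (0,1,4); (0,3,5); (0,4,6); (0,5,7); (0,6,7); (1,2,3); (1,4,5); (1,2,6); (1,5,7); (1,6,7); (2,3,7); (2,4,5); (2,5,6); (2,4,7); (3,4,6); (3,4,7); (3,5,6)].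
Definition L27 : seq trip := [:: (0,1,2); (0,1,3); (0,1,4); (0,1,5); (0,2,6); (0,3,7); (0,4,5); (0,4,6); (0,5,7); (0,6,7); (1,2,6); (1,3,6); (1,4,6); (1,2,7); (1,3,5); (1,4,7); (1,5,7); (2,3,4); (2,3,5); (2,3,7); (2,4,5); (3,4,6); (2,4,7); (2,5,6); (3,4,7); (3,5,6); (5,6,7)].
Definition L28 : seq trip := [:: (0,1,2); (0,1,3); (0,1,4); (0,1,5); (0,2,6); (0,3,6); (0,4,6); (0,2,7); (0,3,5); (0,4,7); (0,5,7); (1,2,3); (2,3,4); (2,3,5); (2,3,6); (1,3,7); (1,4,6); (1,5,6); (1,6,7); (3,4,5); (3,4,7); (3,6,7); (2,5,6); (4,5,6); (1,2,4); (1,5,7); (2,4,7); (2,5,7)].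
Definition L29 : seq trip := [:: (0,1,2); (0,1,3); (0,1,4); (0,1,5); (0,2,3); (0,2,6); (0,4,6); (0,5,6); (0,2,7); (0,4,7); (0,5,7); (1,4,5); (2,4,5); (3,4,5); (4,5,6); (1,6,7); (2,6,7); (3,6,7); (4,6,7); (1,2,6); (1,3,6); (3,5,6); (1,2,4); (1,3,7); (1,5,7); (2,3,5); (2,5,7); (2,3,4); (3,4,7)].
Definition L37 : seq trip := [:: (0,1,2); (0,2,3); (0,2,4); (0,2,5); (0,2,6); (0,1,7); (0,3,7); (0,4,7); (0,5,7); (0,1,6); (0,3,4); (0,3,5); (0,4,6); (0,5,6); (1,2,3); (1,3,4); (1,3,5); (1,3,6); (1,2,4); (1,4,5); (1,5,6); (1,5,7); (1,4,7); (1,6,7); (2,3,7); (2,4,7); (2,5,7); (2,6,7); (2,4,5); (2,3,6); (2,5,6); (3,4,6); (4,5,6); (3,4,5); (3,5,7); (3,6,7); (4,6,7)].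
Definition L38 : seq trip := [:: (0,1,2); (0,1,3); (0,1,4); (0,1,5); (0,1,6); (0,2,7); (0,3,7); (0,4,7); (0,5,7); (0,2,6); (0,3,6); (1,2,3); (2,3,4); (2,3,5); (2,3,6); (2,3,7); (0,2,4); (0,4,5); (0,5,6); (1,2,4); (1,2,5); (1,2,6); (1,3,7); (1,4,7); (1,5,7); (1,6,7); (2,4,5); (2,5,7); (2,6,7); (1,4,6); (1,3,5); (3,4,5); (3,4,6); (3,4,7); (3,5,6); (4,5,6); (4,6,7); (5,6,7)].
Definition L46 : seq trip := [:: (0,1,2); (0,1,3); (0,1,4); (0,1,5); (0,1,6); (0,1,7); (0,2,3); (0,2,4); (0,2,5); (0,2,6); (0,3,7); (0,4,7); (0,5,7); (0,6,7); (1,2,7); (2,3,7); (2,4,7); (2,5,7); (2,6,7); (0,3,4); (0,3,5); (0,4,6); (0,5,6); (1,3,6); (2,3,6); (3,4,6); (3,5,6); (3,6,7); (1,2,3); (1,2,4); (2,4,5); (2,4,6); (1,2,5); (1,4,6); (1,5,6); (1,6,7); (2,5,6); (1,3,4); (3,4,5); (3,4,7); (1,3,5); (1,4,7); (1,5,7); (3,5,7); (4,5,6); (4,5,7)].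
Definition L47 : seq trip := [:: (0,1,2); (0,1,3); (0,1,4); (0,1,5); (0,1,6); (0,1,7); (0,2,3); (0,2,4); (0,2,5); (0,2,6); (0,2,7); (0,4,5); (1,4,5); (2,4,5); (3,4,5); (4,5,6); (4,5,7); (0,3,4); (0,4,6); (0,3,7); (0,5,6); (0,5,7); (0,6,7); (1,3,5); (2,3,5); (3,5,6); (3,5,7); (1,3,6); (2,3,6); (3,4,6); (3,6,7); (1,4,7); (2,4,7); (3,4,7); (4,6,7); (1,2,3); (1,2,4); (1,2,6); (1,2,7); (1,5,6); (1,5,7); (2,5,6); (2,5,7); (1,3,4); (1,6,7); (2,3,7); (2,4,6)].
Definition A8 : seq trip := [:: (0,1,2); (0,1,3); (0,1,4); (0,1,5); (0,1,6); (0,1,7); (0,2,3); (0,2,4); (0,2,5); (0,2,6); (0,2,7); (0,3,4); (0,3,5); (0,3,6); (0,3,7); (0,4,5); (0,4,6); (0,4,7); (0,5,6); (0,5,7); (0,6,7); (1,2,3); (1,2,4); (1,2,5); (1,2,6); (1,2,7); (1,3,4); (1,3,5); (1,3,6); (1,3,7); (1,4,5); (1,4,6); (1,4,7); (1,5,6); (1,5,7); (1,6,7); (2,3,4); (2,3,5); (2,3,6); (2,3,7); (2,4,5); (2,4,6); (2,4,7); (2,5,6); (2,5,7); (2,6,7); (3,4,5); (3,4,6); (3,4,7); (3,5,6); (3,5,7); (3,6,7); (4,5,6); (4,5,7); (4,6,7); (5,6,7)].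

Lemma eq_inord (x : 'I_8) (a : nat) : (a < 8)%N -> (x == inord a) = (val x == a).
Proof. by move=> ha; rewrite -(inj_eq val_inj) /= inordK. Qed.

Lemma in_Bset t (x : 'I_8) : okt t -> (x \in Bset t) = memt t x.
Proof.
case: t => [[a b] c] /= /and5P [ha hb hc _ _].
by rewrite /Bset /memt !inE /= !eq_inord // orbA.
Qed.

Lemma card_Bset t : okt t -> #|Bset t| = 3%N.
Proof.
case: t => [[a b] c] /= /and5P [ha hb hc hab /andP [hbc hac]].
rewrite /Bset /= -setUA cardsU1 cards2 in_set2 !eq_inord //=.
rewrite !inordK //.
by rewrite (negbTE hab) (negbTE hac) hbc.
Qed.

Lemma lam_pair L (x y : 'I_8) : all okt L ->
  lam (map Bset L) [set x; y] = cnt2 L x y.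
Proof.
move=> hL; rewrite /lam count_map /cnt2; apply: eq_in_count => t /(allP hL) ht /=.
by rewrite subUset !sub1set !in_Bset.
Qed.

Lemma lam_trip (S : {set 'I_8}) : #|S| = 3%N ->
  exists x y z : 'I_8, [/\ val x != val y, val y != val z & val z != val x] /\
   forall L, all okt L -> lam (map Bset L) S = cnt3 L x y z.
Proof.
move=> hS.
have : (2 < #|S|)%N by rewrite hS.
case/card_gt2P => x [y [z [[xS yS zS] [xy yz zx]]]].
exists x, y, z; split; first by rewrite !(inj_eq val_inj) xy yz zx.
have eS : S = [set x; y; z].
  apply/eqP; rewrite eq_sym eqEcard hS; apply/andP; split.
    by apply/subsetP => u; rewrite !inE => /orP [/orP [] | ] /eqP ->.
  rewrite -setUA cardsU1 cards2 in_set2 negb_or yz (eq_sym x z) zx xy.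
  by [].
move=> L0 hL; rewrite eS /lam count_map /cnt3; apply: eq_in_count => t /(allP hL) ht /=.
by rewrite !subUset !sub1set !in_Bset // andbA.
Qed.

Lemma in_iota8 (x : 'I_8) : val x \in iota 0 8.
Proof. by rewrite mem_iota ltn_ord. Qed.

Lemma pairchkP L g l (x y : 'I_8) : pairchk L g l -> x != y ->
  ((cnt2 L x y)%:Z - l = g x y) /\ (g x y \in [:: -1; 0; 1]).
Proof.
move=> /allP /(_ (val x) (in_iota8 x)) /allP /(_ (val y) (in_iota8 y)) h xy.
move: h; rewrite (inj_eq val_inj) xy /=.
by case/andP => /eqP -> ->.
Qed.

Lemma pairchk6P L (x y : 'I_8) : pairchk6 L -> x != y -> cnt2 L x y = 6%N.
Proof.
move=> /allP /(_ (val x) (in_iota8 x)) /allP /(_ (val y) (in_iota8 y)) h xy.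
move: h; rewrite (inj_eq val_inj) xy /=.
by move/eqP.
Qed.

Lemma tripchkP L P (x y z : 'I_8) : tripchk L P ->
  [/\ val x != val y, val y != val z & val z != val x] -> P (cnt3 L x y z).
Proof.
move=> /allP /(_ (val x) (in_iota8 x)) /allP /(_ (val y) (in_iota8 y)).
move=> /allP /(_ (val z) (in_iota8 z)) h [h1 h2 h3].
by move: h; rewrite h1 h2 h3.
Qed.

Lemma A8ok : all okt A8. Proof. by vm_compute. Qed.
Lemma A8p : pairchk6 A8. Proof. by vm_compute. Qed.
Lemma A8t : tripchk A8 (fun n => n == 1)%N. Proof. by vm_compute. Qed.

Definition Lk (L : seq trip) (k : nat) := L ++ flatten (nseq k A8).

Lemma count_Lk (P : pred trip) L k :
  count P (Lk L k) = (count P L + k * count P A8)%N.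
Proof.
rewrite /Lk count_cat; congr (_ + _)%N.
elim: k => [|k IH]; first by rewrite mul0n.
have -> : flatten (nseq k.+1 A8) = A8 ++ flatten (nseq k A8) by [].
by rewrite count_cat IH mulSn.
Qed.

Lemma size_Lk L k : size (Lk L k) = (size L + k * 56)%N.
Proof.
rewrite /Lk size_cat; congr (_ + _)%N.
elim: k => [|k IH]; first by rewrite mul0n.
have -> : flatten (nseq k.+1 A8) = A8 ++ flatten (nseq k A8) by [].
by rewrite size_cat IH mulSn.
Qed.

Lemma Lk_ok L k : all okt L -> all okt (Lk L k).
Proof.
move=> hL; rewrite /Lk all_cat hL /=.
elim: k => [|k IH]; first by [].
have -> : flatten (nseq k.+1 A8) = A8 ++ flatten (nseq k A8) by [].
by rewrite all_cat A8ok.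
Qed.

Lemma defect_Lk L k l (x y : 'I_8) : all okt L -> x != y ->
  defect (map Bset (Lk L k)) (l + (6 * k)%:Z) x y = defect (map Bset L) l x y.
Proof.
move=> hL xy; rewrite /defect !lam_pair //; last exact: Lk_ok.
rewrite /cnt2 count_Lk -/(cnt2 A8 x y) (pairchk6P A8p xy).
rewrite -!/(cnt2 _ _ _); lia.
Qed.

Lemma iso_Lk L k l g : all okt L ->
  defect_iso (map Bset L) l g -> defect_iso (map Bset (Lk L k)) (l + (6 * k)%:Z) g.
Proof.
move=> hL [s hs]; exists s => x y xy.
rewrite defect_Lk //; first exact: hs.
by rewrite (inj_eq perm_inj).
Qed.

Lemma iso_base L l g : all okt L -> pairchk L g l -> defect_iso (map Bset L) l g.
Proof.
move=> hL hc; exists 1%g => x y xy; rewrite !perm1 /defect lam_pair //.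
by case: (pairchkP hc xy).
Qed.


Lemma NW_ext L r k (l0 e0 : int) g :
  all okt L -> size L = r -> tripchk L (fun n => n <= 1)%N ->
  pairchk L g l0 ->
  assoc_pair 8 (r + k * 56) (l0 + (6 * k)%:Z) e0 ->
  ((C1 8 (r + k * 56) (l0 + (6 * k)%:Z) /\ defect_C1 (map Bset L) l0 e0) \/
   (C2 8 (r + k * 56) (l0 + (6 * k)%:Z) /\ defect_C2 (map Bset L) l0 e0)) ->
  NWBTS 8 (r + k * 56) (map Bset (Lk L k)).
Proof.
move=> hL hs ht hp ha hC.
have hLk := Lk_ok k hL.
split.
  split; first by [].
  split; first by rewrite size_map size_Lk hs.
  rewrite all_map; apply/allP => t htt /=.
  by rewrite card_Bset //; exact: (allP hLk).
split.
  move=> S T hS hT.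
  have [x [y [z [hd hl]]]] := lam_trip hS.
  have [x' [y' [z' [hd' hl']]]] := lam_trip hT.
  rewrite (hl _ hLk) (hl' _ hLk) /cnt3 !count_Lk -!/(cnt3 _ _ _ _).
  have := tripchkP ht hd; have := tripchkP A8t hd; have := tripchkP A8t hd'.
  move=> /eqP -> /eqP ->; lia.
exists (l0 + (6 * k)%:Z), e0; split; first exact: ha.
split.
  move=> x y xy; rewrite defect_Lk // /defect lam_pair //.
  by case: (pairchkP hp xy) => -> .
case: hC => [[c d] | [c d]]; [left | right]; split => //.
  case: d => s hs' [[-> iso] | [-> iso]]; exists s => //; [left | right];
    split => //; exact: iso_Lk.
move: d; rewrite /defect_C2; case: ifP => _.
  by case=> p [m [h1 [h2 iso]]]; exists p, m; split => //; split => //; exact: iso_Lk.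
case=> [[p [m [h1 [h2 iso]]]] | [p [m [h1 [h2 iso]]]]]; [left | right];
  exists p, m; split => //; split => //; exact: iso_Lk.
Qed.

End Helpers.
Section Cases.
Local Open Scope ring_scope.
Lemma case9 k : exists F, NWBTS 8 (9 + k * 56) F.
Proof.
exists (map Bset (Lk L9 k)).
apply: (@NW_ext L9 9 k 1 (-1) (H1 0%N)).
- by vm_compute.
- by [].
- by vm_compute.
- by vm_compute.
- rewrite /assoc_pair (_ : 'C(8,2) = 28%N) //; lia.
- right; split.
  + rewrite /C2; split; first by []. lia.
  + rewrite /defect_C2 (_ : (2 %| _)%Z = false); last by vm_compute.
    left; exists 0%N, 2%N; split; first lia. split; first lia.
    apply: iso_base; by vm_compute.
Qed.

Lemma case10 k : exists F, NWBTS 8 (10 + k * 56) F.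
Proof.
exists (map Bset (Lk L10 k)).
apply: (@NW_ext L10 10 k 1 2 (H0 3%N)).
- by vm_compute.
- by [].
- by vm_compute.
- by vm_compute.
- rewrite /assoc_pair (_ : 'C(8,2) = 28%N) //; lia.
- right; split.
  + rewrite /C2; split; first by []. lia.
  + rewrite /defect_C2 (_ : (2 %| _)%Z = true); last by vm_compute.
    exists 3%N, 1%N; split; first lia. split; first lia.
    apply: iso_base; by vm_compute.
Qed.

Lemma case18 k : exists F, NWBTS 8 (18 + k * 56) F.
Proof.
exists (map Bset (Lk L18 k)).
apply: (@NW_ext L18 18 k 2 (-2) (Gcyc (-1))).
- by vm_compute.
- by [].
- by vm_compute.
- by vm_compute.
- rewrite /assoc_pair (_ : 'C(8,2) = 28%N) //; lia.
- left; split.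
  + rewrite /C1; split; first by []. split.
    * left; lia.
    * have -> : ((2 + (6 * k)%:Z) %% 6)%Z = 2 by lia. by [].
  + exists (-1); first by []. right; split; first lia.
    apply: iso_base; by vm_compute.
Qed.

Lemma case19 k : exists F, NWBTS 8 (19 + k * 56) F.
Proof.
exists (map Bset (Lk L19 k)).
apply: (@NW_ext L19 19 k 2 1 (Gtri 1)).
- by vm_compute.
- by [].
- by vm_compute.
- by vm_compute.
- rewrite /assoc_pair (_ : 'C(8,2) = 28%N) //; lia.
- left; split.
  + rewrite /C1; split; first by []. split.
    * right; lia.
    * have -> : ((2 + (6 * k)%:Z) %% 6)%Z = 2 by lia. by [].
  + exists 1; first by []. left; split; first lia.
    apply: iso_base; by vm_compute.
Qed.

Lemma case27 k : exists F, NWBTS 8 (27 + k * 56) F.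
Proof.
exists (map Bset (Lk L27 k)).
apply: (@NW_ext L27 27 k 3 (-3) (H2 0%N)).
- by vm_compute.
- by [].
- by vm_compute.
- by vm_compute.
- rewrite /assoc_pair (_ : 'C(8,2) = 28%N) //; lia.
- right; split.
  + rewrite /C2; split; first by []. lia.
  + rewrite /defect_C2 (_ : (2 %| _)%Z = false); last by vm_compute.
    right; exists 0%N, 2%N; split; first lia. split; first lia.
    apply: iso_base; by vm_compute.
Qed.

Lemma case28 k : exists F, NWBTS 8 (28 + k * 56) F.
Proof.
exists (map Bset (Lk L28 k)).
apply: (@NW_ext L28 28 k 3 0 (H0 2%N)).
- by vm_compute.
- by [].
- by vm_compute.
- by vm_compute.
- rewrite /assoc_pair (_ : 'C(8,2) = 28%N) //; lia.
- right; split.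
  + rewrite /C2; split; first by []. lia.
  + rewrite /defect_C2 (_ : (2 %| _)%Z = true); last by vm_compute.
    exists 2%N, 2%N; split; first lia. split; first lia.
    apply: iso_base; by vm_compute.
Qed.

Lemma case29 k : exists F, NWBTS 8 (29 + k * 56) F.
Proof.
exists (map Bset (Lk L29 k)).
apply: (@NW_ext L29 29 k 3 3 (H1 2%N)).
- by vm_compute.
- by [].
- by vm_compute.
- by vm_compute.
- rewrite /assoc_pair (_ : 'C(8,2) = 28%N) //; lia.
- right; split.
  + rewrite /C2; split; first by []. lia.
  + rewrite /defect_C2 (_ : (2 %| _)%Z = false); last by vm_compute.
    left; exists 2%N, 0%N; split; first lia. split; first lia.
    apply: iso_base; by vm_compute.
Qed.

Lemma case37 k : exists F, NWBTS 8 (37 + k * 56) F.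
Proof.
exists (map Bset (Lk L37 k)).
apply: (@NW_ext L37 37 k 4 (-1) (Gtri (-1))).
- by vm_compute.
- by [].
- by vm_compute.
- by vm_compute.
- rewrite /assoc_pair (_ : 'C(8,2) = 28%N) //; lia.
- left; split.
  + rewrite /C1; split; first by []. split.
    * left; lia.
    * have -> : ((4 + (6 * k)%:Z) %% 6)%Z = 4 by lia. by [].
  + exists (-1); first by []. left; split; first lia.
    apply: iso_base; by vm_compute.
Qed.

Lemma case38 k : exists F, NWBTS 8 (38 + k * 56) F.
Proof.
exists (map Bset (Lk L38 k)).
apply: (@NW_ext L38 38 k 4 2 (Gcyc 1)).
- by vm_compute.
- by [].
- by vm_compute.
- by vm_compute.
- rewrite /assoc_pair (_ : 'C(8,2) = 28%N) //; lia.
- left; split.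
  + rewrite /C1; split; first by []. split.
    * right; lia.
    * have -> : ((4 + (6 * k)%:Z) %% 6)%Z = 4 by lia. by [].
  + exists 1; first by []. right; split; first lia.
    apply: iso_base; by vm_compute.
Qed.

Lemma case46 k : exists F, NWBTS 8 (46 + k * 56) F.
Proof.
exists (map Bset (Lk L46 k)).
apply: (@NW_ext L46 46 k 5 (-2) (H0 1%N)).
- by vm_compute.
- by [].
- by vm_compute.
- by vm_compute.
- rewrite /assoc_pair (_ : 'C(8,2) = 28%N) //; lia.
- right; split.
  + rewrite /C2; split; first by []. lia.
  + rewrite /defect_C2 (_ : (2 %| _)%Z = true); last by vm_compute.
    exists 1%N, 3%N; split; first lia. split; first lia.
    apply: iso_base; by vm_compute.
Qed.

Lemma case47 k : exists F, NWBTS 8 (47 + k * 56) F.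
Proof.
exists (map Bset (Lk L47 k)).
apply: (@NW_ext L47 47 k 5 1 (H1 1%N)).
- by vm_compute.
- by [].
- by vm_compute.
- by vm_compute.
- rewrite /assoc_pair (_ : 'C(8,2) = 28%N) //; lia.
- right; split.
  + rewrite /C2; split; first by []. lia.
  + rewrite /defect_C2 (_ : (2 %| _)%Z = false); last by vm_compute.
    left; exists 1%N, 1%N; split; first lia. split; first lia.
    apply: iso_base; by vm_compute.
Qed.

End Cases.

Theorem lemmaA3 (b : nat) :
  (b %% 56)%N \in [:: 9; 10; 18; 19; 27; 28; 29; 37; 38; 46; 47]%N ->
  exists F : seq {set 'I_8}, NWBTS 8 b F.
Proof.
have eb := divn_eq b 56.
rewrite [in exists _, _]eb addnC.
move: (b %/ 56)%N (b %% 56)%N => k r.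
rewrite !inE => H.
repeat (case/orP: H => [/eqP -> | H]).
- exact: case9.
- exact: case10.
- exact: case18.
- exact: case19.
- exact: case27.
- exact: case28.
- exact: case29.
- exact: case37.
- exact: case38.
- exact: case46.
- move/eqP: H => ->; exact: case47.
Qed.
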